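(* Let $\mathsf V$ be a 1ESP variety and $h$ an algebraic e-generalization problem for $\mathsf V$. Then the poset of solutions $(\mathscr A(h),\sqsubseteq)$ is dually isomorphic to the poset $(\mathscr G(h),\subseteq)$.
   Context: $\mathbf F_{\mathsf V}(z)$ is the free algebra of the variety $\mathsf V$ on one generator $z$. An algebra is projective in $\mathsf V$ iff it is a retract of a free algebra of $\mathsf V$; exact if isomorphic to a finitely generated subalgebra of a finitely generated free algebra of $\mathsf V$. An algebra $\mathbf S$ is strongly projective in $\mathsf V$ if it is projective and, for every embedding $i:\mathbf S\to\mathbf P$ into a projective algebra $\mathbf P$, there is a homomorphism $j:\mathbf P\to\mathbf S$ with $j\circ i=\mathrm{id}_{\mathbf S}$; $\mathsf V$ is 1ESP if every 1-generated exact algebra in $\mathsf V$ is strongly projective. An algebraic e-generalization problem is a homomorphism $h:\mathbf F_{\mathsf V}(z)\to\prod_{k=1}^m\mathbf E_k$ with each $\mathbf E_k$ 1-generated exact and each $p_k\circ h$ surjective. A solution of $h$ is a homomorphism $g:\mathbf F_{\mathsf V}(z)\to\mathbf P$, $\mathbf P$ finitely generated projective, with $f\circ g=h$ for some homomorphism $f$. For homomorphisms with common domain, $g\sqsubseteq g'$ iff $f\circ g'=g$ for some homomorphism $f$; $(\mathscr A(h),\sqsubseteq)$ is the poset of solutions modulo $\sqsubseteq$-equivalence. $\mathscr G(h)=\{\ker(g): g\text{ a solution of }h\}$. *)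

(* Defs.v *)
From mathcomp Require Import all_boot.
Set Implicit Arguments.
Unset Strict Implicit.
Unset Printing Implicit Defensive.

Record signature := Signature { op_sym :> Type; arity : op_sym -> nat }.

Section UniversalAlgebra.
Variable S : signature.

Record algebra := Algebra {
  carrier :> Type;
  interp : forall f : S, ('I_(arity f) -> carrier) -> carrier }.

Inductive term (X : Type) : Type :=
  | Var (x : X)
  | App (f : S) (args : 'I_(arity f) -> term X).

Fixpoint eval (A : algebra) (X : Type) (env : X -> A) (t : term X) : A :=
  match t with
  | Var x => env x
  | App f args => @interp A f (fun i => eval env (args i))
  end.

(* A variety is given by a set of identities (equational class). *)
Definition identities := term nat -> term nat -> Prop.

(* Algebras have nonempty universes (standard convention). *)
Definition in_var (Eqs : identities) (A : algebra) : Prop :=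
  inhabited A /\
  forall s t, Eqs s t -> forall env : nat -> A, eval env s = eval env t.

Definition is_hom (A B : algebra) (h : A -> B) : Prop :=
  forall (f : S) (args : 'I_(arity f) -> A),
    h (@interp A f args) = @interp B f (fun i => h (args i)).

Definition closed_sub (A : algebra) (U : A -> Prop) : Prop :=
  forall (f : S) (args : 'I_(arity f) -> A),
    (forall i, U (args i)) -> U (@interp A f args).

Definition generated_by (A : algebra) (G : A -> Prop) : Prop :=
  forall U : A -> Prop, closed_sub U -> (forall x, G x -> U x) -> forall x, U x.

Definition finitely_generated (A : algebra) : Prop :=
  exists (n : nat) (s : 'I_n -> A), generated_by (fun x => exists i, s i = x).

Definition one_generated (A : algebra) : Prop :=
  exists a : A, generated_by (fun x => x = a).

Definition is_free (Eqs : identities) (X : Type) (F : algebra) (eta : X -> F)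
  : Prop :=
  in_var Eqs F /\
  forall B : algebra, in_var Eqs B -> forall v : X -> B,
    (exists h : F -> B, is_hom h /\ forall x, h (eta x) = v x) /\
    (forall h1 h2 : F -> B, is_hom h1 -> is_hom h2 ->
       (forall x, h1 (eta x) = h2 (eta x)) -> forall y, h1 y = h2 y).

Definition projective (Eqs : identities) (P : algebra) : Prop :=
  exists (X : Type) (F : algebra) (eta : X -> F) (i : P -> F) (r : F -> P),
    is_free Eqs eta /\ is_hom i /\ is_hom r /\ forall x, r (i x) = x.

(* Exact: isomorphic to a finitely generated subalgebra of a finitely
   generated free algebra, i.e. finitely generated and embeddable (injective
   homomorphism) into a free algebra on finitely many generators. *)
Definition exact (Eqs : identities) (E : algebra) : Prop :=
  finitely_generated E /\
  exists (n : nat) (F : algebra) (eta : 'I_n -> F) (e : E -> F),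
    is_free Eqs eta /\ is_hom e /\ injective e.

Definition strongly_projective (Eqs : identities) (S0 : algebra) : Prop :=
  projective Eqs S0 /\
  forall (P : algebra) (i : S0 -> P),
    projective Eqs P -> is_hom i -> injective i ->
    exists j : P -> S0, is_hom j /\ forall x, j (i x) = x.

Definition oneESP (Eqs : identities) : Prop :=
  forall A : algebra, one_generated A -> exact Eqs A -> strongly_projective Eqs A.

Definition prod_alg (m : nat) (E : 'I_m -> algebra) : algebra :=
  @Algebra (forall k : 'I_m, E k)
    (fun f args k => @interp (E k) f (fun i => args i k)).

Definition proj (m : nat) (E : 'I_m -> algebra) (k : 'I_m) :
  prod_alg E -> E k := fun x => x k.

(* Algebraic e-generalization problem (F is the free algebra on one
   generator, fixed in the theorem). *)
Definition egen_problem (Eqs : identities) (F : algebra) (m : nat)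
  (E : 'I_m -> algebra) (h : F -> prod_alg E) : Prop :=
  is_hom h /\
  (forall k, one_generated (E k) /\ exact Eqs (E k)) /\
  (forall k (y : E k), exists x, proj k (h x) = y).

Definition solution (Eqs : identities) (F : algebra) (m : nat)
  (E : 'I_m -> algebra) (h : F -> prod_alg E) (P : algebra) (g : F -> P)
  : Prop :=
  is_hom g /\ projective Eqs P /\ finitely_generated P /\
  exists f : P -> prod_alg E, is_hom f /\ forall x, f (g x) = h x.

Definition gen_le (F P P' : algebra) (g : F -> P) (g' : F -> P') : Prop :=
  exists f : P' -> P, is_hom f /\ forall x, f (g' x) = g x.

Definition ker (A B : algebra) (g : A -> B) : A -> A -> Prop :=
  fun x y => g x = g y.

Definition in_G (Eqs : identities) (F : algebra) (m : nat)
  (E : 'I_m -> algebra) (h : F -> prod_alg E) (R : F -> F -> Prop) : Prop :=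
  exists (P : algebra) (g : F -> P),
    solution Eqs h g /\ forall x y, R x y <-> ker g x y.

(* (𝒜(h), ⊑) is dually isomorphic to (𝒢(h), ⊆): there is a map Phi from
   solutions to 𝒢(h), onto 𝒢(h), with  g ⊑ g'  <->  Phi g' ⊆ Phi g.
   (This forces Phi to be constant on ⊑-equivalence classes and injective on
   them, i.e. an order-reversing bijection 𝒜(h) -> 𝒢(h).) *)
Definition dually_isomorphic_AG (Eqs : identities) (F : algebra) (m : nat)
  (E : 'I_m -> algebra) (h : F -> prod_alg E) : Prop :=
  exists Phi : forall P : algebra, (F -> P) -> F -> F -> Prop,
    (forall (P : algebra) (g : F -> P), solution Eqs h g -> in_G Eqs h (Phi P g))
    /\ (forall R, in_G Eqs h R ->
          exists (P : algebra) (g : F -> P),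
            solution Eqs h g /\ forall x y, R x y <-> Phi P g x y)
    /\ (forall (P : algebra) (g : F -> P) (P' : algebra) (g' : F -> P'),
          solution Eqs h g -> solution Eqs h g' ->
          (gen_le g g' <-> forall x y, Phi P' g' x y -> Phi P g x y)).

End UniversalAlgebra.

(* Main.v *)
Require Import Defs.
From mathcomp Require Import all_boot.
From Stdlib Require Import ClassicalEpsilon FunctionalExtensionality ProofIrrelevance Classical.
From Stdlib Require List.
Set Implicit Arguments.
Unset Strict Implicit.

Lemma fchoice (I T : Type) (P : I -> T -> Prop) :
  (forall i, exists x, P i x) -> exists f : I -> T, forall i, P i (f i).
Proof.
move=> H; exists (fun i => proj1_sig (constructive_indefinite_description _ (H i))).
by move=> i; exact: (proj2_sig (constructive_indefinite_description _ (H i))).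
Qed.

Definition subalg (S : signature) (A : algebra S) (U : A -> Prop)
  (HU : closed_sub U) : algebra S :=
  @Algebra S {x : A | U x}
    (fun f args => exist U (interp (fun i => proj1_sig (args i)))
                      (HU f _ (fun i => proj2_sig (args i)))).

Lemma sub_val_hom (S : signature) (A : algebra S) (U : A -> Prop) (HU : closed_sub U) :
  is_hom (fun x : subalg HU => proj1_sig x).
Proof. by []. Qed.

Lemma sub_val_inj (S : signature) (A : algebra S) (U : A -> Prop) (HU : closed_sub U) :
  injective (fun x : subalg HU => proj1_sig x).
Proof.
move=> [x Hx] [y Hy] /= Exy; subst y; f_equal; apply: proof_irrelevance.
Qed.

Lemma eval_hom (S : signature) (A B : algebra S) (h : A -> B) (X : Type)
  (env : X -> A) (t : term S X) : is_hom h -> h (eval env t) = eval (fun x => h (env x)) t.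
Proof.
move=> Hh; elim: t => [x|f args IH] //=.
rewrite Hh; f_equal; apply: functional_extensionality => i; exact: IH.
Qed.

Lemma sub_in_var (S : signature) (Eqs : identities S) (A : algebra S) (U : A -> Prop)
  (HU : closed_sub U) : in_var Eqs A -> (exists a, U a) -> in_var Eqs (subalg HU).
Proof.
move=> [_ HA] [a Ha]; split; first by constructor; exact: (exist U a Ha).
move=> s t Est env; apply: (@sub_val_inj _ _ _ HU).
rewrite !(eval_hom _ _ (@sub_val_hom _ _ _ HU)); exact: HA.
Qed.

Lemma hom_comp (S : signature) (A B C : algebra S) (f : A -> B) (g : B -> C) :
  is_hom f -> is_hom g -> is_hom (fun x => g (f x)).
Proof. move=> Hf Hg fs args; by rewrite Hf Hg. Qed.

Lemma hom_id (S : signature) (A : algebra S) : is_hom (fun x : A => x).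
Proof. by []. Qed.

Lemma free_gen (S : signature) (Eqs : identities S) (X : Type) (F : algebra S)
  (eta : X -> F) : is_free Eqs eta ->
  forall U : F -> Prop, closed_sub U -> (forall x, U (eta x)) -> (exists a, U a) ->
  forall y, U y.
Proof.
move=> [HF Hu] U HU Heta Hne y.
have HG := sub_in_var HU HF Hne.
have [[phi [Hphi Hphieta]] _] := Hu _ HG (fun x => exist U (eta x) (Heta x)).
have H : forall y, proj1_sig (phi y) = y.
  apply: ((Hu _ HF eta).2 (fun x => proj1_sig (phi x)) (fun x => x)
    (hom_comp Hphi (@sub_val_hom _ _ _ HU)) (@hom_id _ _)).
  by move=> x; rewrite Hphieta.
rewrite -[y]H; exact: proj2_sig.
Qed.

Fixpoint occ (S : signature) (X : Type) (t : term S X) (x : X) : Prop :=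
  match t with
  | Var y => x = y
  | App f args => exists i, occ (args i) x
  end.

Lemma in_concat_map (I : eqType) (X : Type) (L : I -> list X) (s : seq I) i x :
  i \in s -> List.In x (L i) -> List.In x (List.concat (List.map L s)).
Proof.
elim: s => [|j s IH] //=; rewrite in_cons => /orP [/eqP -> | Hi] Hx; apply: List.in_or_app.
  by left.
by right; apply: IH.
Qed.

Lemma fin_union (X : Type) n (P : 'I_n -> X -> Prop) :
  (forall i, exists l, forall x, P i x -> List.In x l) ->
  exists l, forall i x, P i x -> List.In x l.
Proof.
move=> /fchoice [L HL]; exists (List.concat (List.map L (enum 'I_n))).
move=> i x Hx; apply: (@in_concat_map _ _ L _ i); first by rewrite mem_enum.
exact: HL.
Qed.

Lemma occ_list (S : signature) (X : Type) (t : term S X) :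
  exists l, forall x, occ t x -> List.In x l.
Proof.
elim: t => [y|f args IH] /=.
  by exists (y :: nil) => x ->; left.
have [l Hl] := fin_union IH; exists l => x [i Hi]; exact: Hl Hi.
Qed.

Lemma dedupe (X : Type) (l : list X) :
  exists l', List.NoDup l' /\ forall x, List.In x l -> List.In x l'.
Proof.
elim: l => [|a l [l' [Hnd Hin]]]; first by exists nil; split => //; constructor.
case: (classic (List.In a l')) => Ha.
  exists l'; split => // x [<-|Hx] //; exact: Hin.
exists (a :: l'); split; first exact: List.NoDup_cons.
by move=> x [<-|Hx]; [left | right; apply: Hin].
Qed.

Lemma list_enum (X : Type) (l : list X) : List.NoDup l ->
  exists v : 'I_(List.length l) -> X, injective v /\ forall x, List.In x l -> exists k, v k = x.
Proof.
case: l => [|a l0] Hnd.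
  have v : 'I_0 -> X by case=> k Hk; exfalso; move: Hk; rewrite ltn0.
  exists v; split; first by case=> k Hk; exfalso; move: Hk; rewrite ltn0.
  by [].
exists (fun k => List.nth k (a :: l0) a); split.
  move=> [i Hi] [j Hj] /= Hij; apply: val_inj => /=.
  by apply: ((proj1 (List.NoDup_nth (a :: l0) a)) Hnd i j) => //; apply/ltP.
move=> x Hx; have [k [Hk Hkx]] := List.In_nth _ _ a Hx.
by exists (Ordinal (introT ltP Hk)).
Qed.

Definition gen_pred (S : signature) (A : algebra S) (G : A -> Prop) : A -> Prop :=
  fun x => forall V : A -> Prop, closed_sub V -> (forall y, G y -> V y) -> V x.

Lemma gen_closed (S : signature) (A : algebra S) (G : A -> Prop) : closed_sub (gen_pred G).
Proof. move=> f args H V HV HG; apply: (HV) => i; exact: (H i V HV HG). Qed.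

Lemma gen_base (S : signature) (A : algebra S) (G : A -> Prop) y : G y -> gen_pred G y.
Proof. by move=> Hy V _ HG; apply: HG. Qed.

Lemma gen_sub_generated (S : signature) (A : algebra S) (G : A -> Prop) :
  @generated_by S (subalg (@gen_closed S A G)) (fun y => G (proj1_sig y)).
Proof.
move=> V HV HG.
pose Q := fun x => gen_pred G x /\ forall H : gen_pred G x, V (exist _ x H).
have HQ : closed_sub Q.
  move=> f args Hargs; split.
    apply: gen_closed => i; exact: (Hargs i).1.
  move=> H.
  have -> : exist (gen_pred G) (interp args) H =
           @interp S (subalg (@gen_closed S A G)) f (fun i => exist _ (args i) (Hargs i).1).
    by rewrite /=; f_equal; apply: proof_irrelevance.
  apply: HV => i; exact: (Hargs i).2.
have HGQ : forall y, G y -> Q y.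
  move=> y Gy; split; first exact: gen_base.
  move=> H; exact: (HG (exist _ y H)).
move=> [x Hx]; exact: ((Hx Q HQ HGQ).2 Hx).
Qed.

Definition ext_fun (X B : Type) n (v : 'I_n -> X) (v' : 'I_n -> B) (b0 : B) (x : X) : B :=
  match excluded_middle_informative (exists k, v k = x) with
  | left H => v' (proj1_sig (constructive_indefinite_description _ H))
  | right _ => b0
  end.

Lemma ext_funE (X B : Type) n (v : 'I_n -> X) (v' : 'I_n -> B) (b0 : B) k :
  injective v -> ext_fun v v' b0 (v k) = v' k.
Proof.
move=> Hv; rewrite /ext_fun; case: excluded_middle_informative => [H|H]; last first.
  by exfalso; apply: H; exists k.
by case: (constructive_indefinite_description _ H) => k' /= /Hv ->.
Qed.

Lemma sub_gen_free (S : signature) (Eqs : identities S) (X : Type) (FX : algebra S)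
  (eta : X -> FX) n (v : 'I_n -> X) :
  is_free Eqs eta -> injective v ->
  (exists a, gen_pred (fun y => exists k, eta (v k) = y) a) ->
  @is_free S Eqs 'I_n (subalg (@gen_closed S FX (fun y => exists k, eta (v k) = y)))
    (fun k => exist _ (eta (v k)) (gen_base (ex_intro _ k erefl))).
Proof.
move=> [HF Hu] Hv Hne; split; first exact: sub_in_var.
move=> B HB v'; split.
  have [b0] := HB.1.
  have [[phi [Hphi Hphieta]] _] := Hu B HB (ext_fun v v' b0).
  exists (fun y => phi (proj1_sig y)); split.
    exact: (hom_comp (@sub_val_hom _ _ _ _) Hphi).
  by move=> k /=; rewrite Hphieta ext_funE.
move=> h1 h2 H1 H2 Heq.
apply: (@gen_sub_generated S FX (fun y => exists k, eta (v k) = y) (fun y => h1 y = h2 y)).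
  by move=> f args Hargs; rewrite H1 H2; f_equal; apply: functional_extensionality.
move=> [y Hy] /= [k Hk]; subst y.
have -> : exist _ (eta (v k)) Hy = exist _ (eta (v k)) (gen_base (ex_intro _ k erefl)) :> subalg (@gen_closed S FX (fun y => exists k, eta (v k) = y)).
  by f_equal; apply: proof_irrelevance.
exact: Heq.
Qed.

Lemma free_terms (S : signature) (Eqs : identities S) (X : Type) (FX : algebra S)
  (eta : X -> FX) : is_free Eqs eta -> X -> forall y, exists t, eval eta t = y.
Proof.
move=> HF x0; apply: (free_gen HF).
- move=> f args Hargs; have [ts Hts] := fchoice Hargs.
  exists (App ts) => /=; f_equal; apply: functional_extensionality => i; exact: Hts.
- by move=> x; exists (Var S x).
- by exists (eta x0); exists (Var S x0).
Qed.

Lemma occ_gen (S : signature) (X : Type) (FX : algebra S) (eta : X -> FX) n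
  (v : 'I_n -> X) (t : term S X) :
  (forall x, occ t x -> exists k, v k = x) ->
  gen_pred (fun y => exists k, eta (v k) = y) (eval eta t).
Proof.
elim: t => [y|f args IH] /= Hocc.
  apply: gen_base; have [k Hk] := Hocc y erefl; by exists k; rewrite Hk.
apply: gen_closed => i; apply: IH => x Hx; apply: Hocc; by exists i.
Qed.

Lemma ord0_false (k : 'I_0) : False.
Proof. by case: k => k Hk; move: Hk; rewrite ltn0. Qed.

Lemma free_empty (S : signature) (Eqs : identities S) (X : Type) (FX : algebra S)
  (eta : X -> FX) (eta0 : 'I_0 -> FX) : is_free Eqs eta -> (X -> False) ->
  is_free Eqs eta0.
Proof.
move=> [HF Hu] HX; split => // B HB v'.
have [[phi [Hphi _]] Huniq] := Hu B HB (fun x => False_rect B (HX x)).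
split; first by exists phi; split => // k; case: (ord0_false k).
move=> h1 h2 H1 H2 _; apply: Huniq => // x; case: (HX x).
Qed.

Lemma exact_sub (S : signature) (Eqs : identities S) (P' A : algebra S) (e : A -> P') (a0 : A) :
  projective Eqs P' -> is_hom e -> injective e -> generated_by (fun x => x = a0) ->
  exact Eqs A.
Proof.
move=> [X [FX [eta [i [r [Hfree [Hi [Hr Hri]]]]]]]] He Heinj Hgen; split.
  exists 1, (fun _ => a0) => V HV HG; apply: Hgen => // x ->; apply: HG; by exists ord0.
have Hinj : injective (fun a => i (e a)).
  by move=> a b /(f_equal r); rewrite !Hri => /Heinj.
case: (classic (inhabited X)) => [[x0]|HX]; last first.
  exists 0, FX, (fun k => match ord0_false k with end), (fun a => i (e a)).
  split; first by apply: (free_empty _ Hfree) => x; apply: HX; constructor.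
  split => //; exact: hom_comp.
have [t Ht] := free_terms Hfree x0 (i (e a0)).
have [l Hl] := occ_list t.
have [l' [Hnd Hin]] := dedupe l.
have [v [Hv Hvx]] := list_enum Hnd.
pose G := fun y => exists k, eta (v k) = y.
have HU : forall a, gen_pred G (i (e a)).
  apply: Hgen.
    by move=> f args H; rewrite He Hi; apply: gen_closed.
  move=> a ->; rewrite -Ht; apply: occ_gen => x Hx; apply: Hvx; apply: Hin; exact: Hl.
exists (List.length l'), (subalg (@gen_closed S FX G)),
  (fun k => exist _ (eta (v k)) (gen_base (ex_intro _ k erefl))),
  (fun a => exist _ (i (e a)) (HU a)).
split; first by apply: sub_gen_free => //; exists (i (e a0)); exact: HU.
split.
  move=> f args; apply: (@sub_val_inj _ _ _ (@gen_closed S FX G)) => /=.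
  by rewrite He Hi.
move=> a b H; apply: Hinj; exact: (f_equal (@proj1_sig _ _) H).
Qed.

Lemma extend_sol (S : signature) (Eqs : identities S) (F : algebra S) (z : F)
  (HF : is_free Eqs (fun _ : unit => z)) (HV : oneESP Eqs)
  (P P' : algebra S) (g : F -> P) (g' : F -> P') :
  is_hom g -> is_hom g' -> projective Eqs P' ->
  (forall x y, g' x = g' y -> g x = g y) ->
  exists f : P' -> P, is_hom f /\ forall x, f (g' x) = g x.
Proof.
move=> Hg Hg' HP' Hker.
pose U := fun p => exists x, g' x = p.
have HU : closed_sub U.
  move=> f args Hargs; have [xs Hxs] := fchoice Hargs.
  exists (interp xs); rewrite Hg'; f_equal; apply: functional_extensionality => i; exact: Hxs.
pose A := subalg HU.
pose gF := fun x : F => (exist U (g' x) (ex_intro _ x erefl) : A).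
have HgF : is_hom gF.
  by move=> f args; apply: (@sub_val_inj _ _ _ HU) => /=; rewrite Hg'.
have Hgen : @generated_by S A (fun a => a = gF z).
  move=> V HVc HVz.
  have HFV : forall x, V (gF x).
    apply: (free_gen HF).
    - by move=> f args H; rewrite HgF; apply: HVc.
    - by move=> _; apply: HVz.
    - by exists z; apply: HVz.
  move=> [p [x Hx]]; subst p.
  have -> : exist U (g' x) (ex_intro _ x erefl) = gF x by [].
  exact: HFV.
have HA : exact Eqs A.
  apply: (exact_sub (e := fun a : A => proj1_sig a)) HP' _ _ Hgen.
    exact: sub_val_hom.
  exact: sub_val_inj.
have [_ HSP] := HV A (ex_intro _ (gF z) Hgen) HA.
have [j [Hj Hjv]] := HSP P' (fun a : A => proj1_sig a) HP' (@sub_val_hom _ _ _ HU)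
  (@sub_val_inj _ _ _ HU).
pose ch := fun a : A => proj1_sig (constructive_indefinite_description _ (proj2_sig a)).
have Hch : forall a : A, g' (ch a) = proj1_sig a.
  move=> a; exact: (proj2_sig (constructive_indefinite_description _ (proj2_sig a))).
pose k := fun a : A => g (ch a).
have Hk : is_hom k.
  move=> f args; rewrite /k.
  have -> : g (ch (interp args)) = g (interp (fun i => ch (args i))).
    apply: Hker; rewrite Hch Hg' /=; f_equal; apply: functional_extensionality => i.
    by rewrite Hch.
  by rewrite Hg.
exists (fun p => k (j p)); split; first exact: hom_comp.
move=> x; have -> : g' x = proj1_sig (gF x) by [].
rewrite Hjv /k; apply: Hker; by rewrite Hch.
Qed.

Theorem theorem4p19 (S : signature) (Eqs : identities S)
  (F : algebra S) (z : F) (HF : is_free Eqs (fun _ : unit => z))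
  (HV : oneESP Eqs)
  (m : nat) (Hm : 0 < m) (E : 'I_m -> algebra S) (h : F -> prod_alg E)
  (Hh : egen_problem Eqs h) :
  dually_isomorphic_AG Eqs h.
Proof.
exists (fun P g => @ker S F P g); split.
  by move=> P g Hs; exists P, g; split.
split.
  by move=> R [P [g [Hs HR]]]; exists P, g; split.
move=> P g P' g' Hs Hs'; split.
  by move=> [f [Hf Hfg]] x y; rewrite /ker -!Hfg => ->.
move=> Hker; have [Hg _] := Hs; have [Hg' [HP' _]] := Hs'.
exact: (extend_sol HF HV Hg Hg' HP' Hker).
Qed.
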